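(* Let $(M,\circ)$ be a fuzzy $\Gamma$-hypersemigroup. Then (i) $\chi_M$ is a left fuzzy $\Gamma$-hyperideal of $(M,\circ)$; (ii) $\chi_M\circ\gamma\circ m=M\circ\gamma\circ m$ for all $m\in M$, $\gamma\in\Gamma$; (iii) $M\circ\gamma\circ m$ is a left fuzzy $\Gamma$-hyperideal of $(M,\circ)$ for all $m\in M$, $\gamma\in\Gamma$; (iv) for any fuzzy subset $\mu\ne0$ of $M$, $\chi_M\circ\gamma\circ\mu$ is a left fuzzy $\Gamma$-hyperideal of $(M,\circ)$ for all $\gamma\in\Gamma$.
   Context: $M,\Gamma$ are nonempty sets; a fuzzy subset of $M$ is a map $M\to[0,1]$. A fuzzy $\Gamma$-hyperoperation assigns to each $(a,\gamma,b)\in M\times\Gamma\times M$ a fuzzy subset $a\circ\gamma\circ b$. For $a\in M$ and fuzzy $\mu$: $(a\circ\gamma\circ\mu)(r)=\bigvee_{t\in M}((a\circ\gamma\circ t)(r)\wedge\mu(t))$ if $\mu\ne0$, else $0$; $(\mu\circ\gamma\circ a)(r)=\bigvee_{t\in M}(\mu(t)\wedge(t\circ\gamma\circ a)(r))$ if $\mu\ne0$, else $0$. For fuzzy $\mu,\nu$: $(\mu\circ\gamma\circ\nu)(t)=\bigvee_{p,q\in M}(\mu(p)\wedge(p\circ\gamma\circ q)(t)\wedge\nu(q))$. $(M,\circ)$ is a fuzzy $\Gamma$-hypersemigroup if $(a\circ\alpha\circ b)\circ\beta\circ c=a\circ\alpha\circ(b\circ\beta\circ c)$ for all $a,b,c\in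 M$, $\alpha,\beta\in\Gamma$. $\chi_M$ is the constant function $1$ on $M$. $M\circ\gamma\circ m$ denotes the fuzzy subset $t\mapsto\bigvee_{p\in M}(p\circ\gamma\circ m)(t)$. For fuzzy sets, $\mu\subseteq\nu$ means $\mu(x)\le\nu(x)$ for all $x$. A fuzzy subset $\mu$ is a left fuzzy $\Gamma$-hyperideal if $a\circ\gamma\circ\mu\subseteq\mu$ for all $a\in M$, $\gamma\in\Gamma$. *)

(* Defs.v *)
From HB Require Import structures.
From mathcomp Require Import all_boot all_order all_algebra.
From mathcomp Require Import boolp classical_sets reals.
Set Implicit Arguments. Unset Strict Implicit. Unset Printing Implicit Defensive.
Import Order.TTheory GRing.Theory Num.Theory.
Local Open Scope ring_scope.
Local Open Scope classical_set_scope.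

Section FuzzyGamma.
Variables (R : realType) (M Gam : Type).

Definition is_fuzzy (mu : M -> R) : Prop := forall x, 0 <= mu x <= 1.

(* a fuzzy Gamma-hyperoperation: (a, g, b) |-> fuzzy subset a o g o b *)
Definition is_fuzzy_hyperop (op : M -> Gam -> M -> M -> R) : Prop :=
  forall a g b, is_fuzzy (op a g b).

Definition chiM : M -> R := fun _ => 1.

Definition el_fz (op : M -> Gam -> M -> M -> R) (a : M) (g : Gam) (mu : M -> R)
  : M -> R := fun r =>
  if `[< mu = (fun _ => 0) >] then 0
  else sup (range (fun t => Num.min (op a g t r) (mu t))).

Definition fz_el (op : M -> Gam -> M -> M -> R) (mu : M -> R) (g : Gam) (a : M)
  : M -> R := fun r =>
  if `[< mu = (fun _ => 0) >] then 0
  else sup (range (fun t => Num.min (mu t) (op t g a r))).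

Definition fz_fz (op : M -> Gam -> M -> M -> R) (mu : M -> R) (g : Gam) (nu : M -> R)
  : M -> R := fun t =>
  sup (range (fun pq : M * M =>
         Num.min (Num.min (mu pq.1) (op pq.1 g pq.2 t)) (nu pq.2))).

Definition M_el (op : M -> Gam -> M -> M -> R) (g : Gam) (m : M) : M -> R :=
  fun t => sup (range (fun p => op p g m t)).

Definition is_fuzzy_Gamma_hypersemigroup (op : M -> Gam -> M -> M -> R) : Prop :=
  is_fuzzy_hyperop op /\
  forall a b c (al be : Gam), fz_el op (op a al b) be c = el_fz op a al (op b be c).

Definition fsubset (mu nu : M -> R) : Prop := forall x, mu x <= nu x.

Definition left_fuzzy_hyperideal (op : M -> Gam -> M -> M -> R) (mu : M -> R) : Prop :=
  is_fuzzy mu /\ forall a g, fsubset (el_fz op a g mu) mu.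

End FuzzyGamma.

(* Main.v *)
Require Import Defs.
From HB Require Import structures.
From mathcomp Require Import all_boot all_order all_algebra.
From mathcomp Require Import boolp classical_sets reals.
Local Open Scope ring_scope.
Import Order.TTheory GRing.Theory Num.Theory.
Local Open Scope classical_set_scope.

Section H.
Variable R : realType.

Lemma le_sup_r {T : Type} {f : T -> R} {B} {x} :
  (forall y, f y <= B) -> f x <= sup (range f).
Proof.
move=> Hb; apply: ub_le_sup; last by exists x.
by exists B => _ [y _ <-].
Qed.

Lemma sup_le_r {T : Type} {f : T -> R} {B} (x : T) :
  (forall y, f y <= B) -> sup (range f) <= B.
Proof.
move=> Hb; apply: ge_sup; first by exists (f x), x.
by move=> _ [y _ <-].
Qed.

Lemma min_sup_le {T : Type} {f : T -> R} {x B U} (x0 : T) :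
  (forall y, f y <= U) -> (forall y, Num.min x (f y) <= B) ->
  Num.min x (sup (range f)) <= B.
Proof.
move=> HU Hb; rewrite leNgt; apply/negP; rewrite lt_min => /andP[Bx Bs].
have hs : has_sup (range f).
  by split; [exists (f x0), x0 | exists U => _ [y _ <-]].
have := @sup_adherent R _ (sup (range f) - B) (ltac:(by rewrite subr_gt0)) hs.
have -> : sup (range f) - (sup (range f) - B) = B by rewrite opprB addrC subrK.
case=> _ [y _ <-] Hy.
have := Hb y; rewrite leNgt => /negP; apply; by rewrite lt_min Bx Hy.
Qed.

End H.

Theorem theorem4p6 (R : realType) (M Gam : Type)
  (HM : inhabited M) (HG : inhabited Gam)
  (op : M -> Gam -> M -> M -> R)
  (Hop : is_fuzzy_Gamma_hypersemigroup op) :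
  left_fuzzy_hyperideal op (@chiM R M)
  /\ (forall (m : M) (g : Gam), fz_el op (@chiM R M) g m = M_el op g m)
  /\ (forall (m : M) (g : Gam), left_fuzzy_hyperideal op (M_el op g m))
  /\ (forall mu : M -> R, is_fuzzy mu -> mu <> (fun _ => 0) ->
        forall g : Gam, left_fuzzy_hyperideal op (fz_fz op (@chiM R M) g mu)).
Proof.
case: HM => x0; case: Hop => Hf Hass.
have op0 a g b t : 0 <= op a g b t by case/andP: (Hf a g b t).
have op1 a g b t : op a g b t <= 1 by case/andP: (Hf a g b t).
have chi0 : @chiM R M <> (fun _ => 0).
  by move=> /(congr1 (fun h => h x0)); rewrite /chiM => /eqP; rewrite oner_eq0.
have Mel01 g m t : 0 <= M_el op g m t <= 1.
  apply/andP; split.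
    by apply: le_trans (op0 x0 g m t) _; apply: (@le_sup_r R _ _ 1).
  by apply: (@sup_le_r R _ _ 1 x0).
have IIa : forall (m : M) (g : Gam), fz_el op (@chiM R M) g m = M_el op g m.
  move=> m g; apply: funext => r; rewrite /fz_el /M_el.
  case: asboolP => // _.
  have -> : (fun t => Num.min (@chiM R M t) (op t g m r)) = (fun t => op t g m r) :> (M -> R) by apply: funext => t; rewrite /chiM; apply/min_idPr; exact: op1.
  by [].
split; [|split; [exact: IIa|split]].
- split; first by move=> x; rewrite /chiM ler01 lexx.
  move=> a g r; rewrite /el_fz; case: asboolP => _; first by rewrite /chiM ler01.
  apply: (@sup_le_r R _ _ 1 x0) => t; rewrite /chiM.
  by rewrite ge_min lexx orbT.
- move=> m g; split; first exact: Mel01.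
  move=> a g' r; rewrite /el_fz; case: asboolP => _.
    by case/andP: (Mel01 g m r).
  apply: (@sup_le_r R M _ (M_el op g m r) x0) => t.
  apply: (@min_sup_le R _ _ _ _ 1 x0) => // p.
  have [Hz|Hnz] := pselect (op p g m = (fun _ => 0)).
    rewrite Hz (min_idPr (op0 _ _ _ _)); by case/andP: (Mel01 g m r).
  apply: (@le_trans _ _ (el_fz op a g' (op p g m) r)).
    rewrite /el_fz; case: asboolP => // _.
    by apply: (@le_sup_r R _ (fun t => Num.min (op a g' t r) (op p g m t)) 1) => y; rewrite ge_min op1.
  rewrite -Hass /fz_el; case: asboolP => _; first by case/andP: (Mel01 g m r).
  apply: (@sup_le_r R M _ (M_el op g m r) x0) => s; rewrite ge_min; apply/orP; right.
  by apply: (@le_sup_r R _ (fun p => op p g m r) 1) => y; exact: op1.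
- move=> mu Hmu Hmu0 g.
  have mu0 q : 0 <= mu q by case/andP: (Hmu q).
  have mu1 q : mu q <= 1 by case/andP: (Hmu q).
  have ub (t : M) (pq : M * M) : Num.min (Num.min (@chiM R M pq.1) (op pq.1 g pq.2 t)) (mu pq.2) <= 1.
    by rewrite ge_min mu1 orbT.
  have F0 t : 0 <= fz_fz op (@chiM R M) g mu t.
    apply: le_trans (@le_sup_r R _ _ 1 (x0, x0) (ub t)).
    by rewrite le_min /= le_min /chiM ler01 op0 mu0.
  have F1 t : fz_fz op (@chiM R M) g mu t <= 1 by apply: (@sup_le_r R (M * M) _ 1 (x0, x0) (ub t)).
  split; first by move=> t; rewrite F0 F1.
  move=> a g' r; rewrite /el_fz; case: asboolP => _; first exact: F0.
  apply: (@sup_le_r R M _ (fz_fz op (@chiM R M) g mu r) x0) => t.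
  apply: (@min_sup_le R _ _ _ _ 1 (x0, x0)) => // -[p q] /=.
  rewrite /chiM (min_idPr (op1 _ _ _ _)) minA.
  apply: (@le_trans _ _ (Num.min (el_fz op a g' (op p g q) r) (mu q))).
    rewrite le_min; apply/andP; split; last by rewrite ge_min lexx orbT.
    apply: (@le_trans _ _ (Num.min (op a g' t r) (op p g q t))); first by rewrite ge_min lexx.
    rewrite /el_fz; case: asboolP => [Hz|_].
      by rewrite Hz ge_min lexx orbT.
    by apply: (@le_sup_r R _ (fun t => Num.min (op a g' t r) (op p g q t)) 1) => y; rewrite ge_min op1.
  rewrite -Hass /fz_el; case: asboolP => _.
    by rewrite (min_idPl (mu0 q)).
  rewrite minC; apply: (@min_sup_le R _ _ _ _ 1 x0) => [y|s]; first by rewrite ge_min op1.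
  apply: le_trans (@le_sup_r R _ _ 1 (s, q) (ub r)) => /=.
  rewrite /chiM (min_idPr (op1 _ _ _ _)) le_min; apply/andP; split.
    by rewrite ge_min; apply/orP; right; rewrite ge_min lexx orbT.
  by rewrite ge_min lexx.
Qed.
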